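(* Let $d\ge 1$, let $s$ be an integer with $1<s<2^d$, write $s=j\cdot 2^k$ with $j$ odd and $k\ge 0$, and let $n\ge d+1$. Then for every $A\subseteq\mathbb{F}_2^n$, \[\lambda^*(n,d,s,A)\le 1-\frac{2^{d-k}-1}{2^{d+1}-1}.\]
   Context: For integers $n\ge d\ge 1$, a $d$-flat in $\mathbb{F}_2^n$ is a set $x_0+U$ with $x_0\in\mathbb{F}_2^n$ and $U$ a $d$-dimensional linear subspace of $\mathbb{F}_2^n$. For $A\subseteq\mathbb{F}_2^n$ and an integer $0\le s\le 2^d$, $\lambda^*(n,d,s,A)$ denotes the fraction of $d$-flats $Q$ in $\mathbb{F}_2^n$ with $|Q\cap A|=s$. *)

(* Defs.v *)
From mathcomp Require Import all_boot all_order all_algebra.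
Set Implicit Arguments. Unset Strict Implicit. Unset Printing Implicit Defensive.
Import GRing.Theory Num.Theory.
Local Open Scope ring_scope.

Notation F2vec n := 'rV['F_2]_n.

Definition rowspace_set n (M : 'M['F_2]_n) : {set F2vec n} :=
  [set v : F2vec n | (v <= M)%MS].

(* All d-flats x0 + U of F_2^n, U a d-dimensional linear subspace
   (= row space of some n x n matrix of rank d). Each flat appears once. *)
Definition flats (n d : nat) : {set {set F2vec n}} :=
  [set [set x0 + u | u in rowspace_set M]
     | x0 in [set: F2vec n], M in [set M : 'M['F_2]_n | \rank M == d]].

Definition lambda_star n d (s : nat) (A : {set F2vec n}) : rat :=
  (#|[set Q in flats n d | #|Q :&: A| == s]|%:R / #|flats n d|%:R)%R.

(* Main.v *)
Require Import Defs.
From mathcomp Require Import all_boot all_order all_algebra.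
From mathcomp Require Import zify ring.
Set Implicit Arguments. Unset Strict Implicit. Unset Printing Implicit Defensive.
Import GRing.Theory Num.Theory.
Local Open Scope ring_scope.

Lemma F2_cases (x : 'F_2) : x = 0 \/ x = 1.
Proof. by case: x => [[|[|]]] //= ?; [left|right]; apply/val_inj. Qed.

Lemma F2_addxx (x : 'F_2) : x + x = 0.
Proof. by case: (F2_cases x) => ->; apply/val_inj. Qed.

Lemma F2_neq0 (x : 'F_2) : (x != 0) = (x == 1).
Proof. by case: (F2_cases x) => ->. Qed.

Lemma mx_addxx p q (A : 'M['F_2]_(p, q)) : A + A = 0.
Proof. by apply/matrixP => i j; rewrite !mxE F2_addxx. Qed.

Lemma mx_addK p q (A B : 'M['F_2]_(p, q)) : A + B + B = A.
Proof. by rewrite -addrA mx_addxx addr0. Qed.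

Lemma arith1 s R a : (0 < R)%N -> (2 * (2 * s + (R - 1) * s) = 2 * s * R + R * a)%N ->
  (2 * s = a * R)%N.
Proof. case: R => // R _; rewrite subn1 /= => H; nia. Qed.

Lemma pow2_dvd_odd r t j : odd j -> (2 ^ r %| j * 2 ^ t)%N -> (r <= t)%N.
Proof.
move=> oj H; rewrite leqNgt; apply/negP => lt.
have : (2 ^ t.+1 %| j * 2 ^ t)%N by apply: dvdn_trans H; apply: dvdn_exp2l.
by rewrite expnS mulnC [(j * _)%N]mulnC dvdn_pmul2l ?expn_gt0 // dvdn2 oj.
Qed.

Section Pure.
Variable m : nat.
Local Notation V := 'rV['F_2]_m.

Definition dot (u c : V) : 'F_2 := (u *m c^T) 0 0.

Lemma dotDr u c1 c2 : dot u (c1 + c2) = dot u c1 + dot u c2.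
Proof. by rewrite /dot linearD /= mulmxDr mxE. Qed.

Lemma dotDl u1 u2 c : dot (u1 + u2) c = dot u1 c + dot u2 c.
Proof. by rewrite /dot mulmxDl mxE. Qed.

Lemma dot0r u : dot u 0 = 0.
Proof. by rewrite /dot trmx0 mulmx0 mxE. Qed.

Lemma card_rowspace p (W : 'M['F_2]_(p, m)) :
  #|[set v : V | (v <= W)%MS]| = (2 ^ \rank W)%N.
Proof.
have -> : [set v : V | (v <= W)%MS] =
          [set u *m row_base W | u in [set: 'rV['F_2]_(\rank W)]].
  apply/setP => v; rewrite inE; apply/idP/imsetP.
    move=> vW; exists (v *m pinvmx (row_base W)); first by rewrite inE.
    by rewrite mulmxKpV //; rewrite eq_row_base.
  by case=> u _ ->; apply: submx_trans (submxMl _ _) _; rewrite eq_row_base.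
rewrite card_imset; last exact: row_free_inj (row_base_free W).
by rewrite cardsT card_mx card_Fp // mul1n.
Qed.


Definition RS p (W : 'M['F_2]_(p, m)) := [set v : V | (v <= W)%MS].

Lemma card_sub_sum (T : finType) (A : {set T}) (P : pred T) :
  #|[set x in A | P x]| = (\sum_(x in A) (P x : nat))%N.
Proof.
rewrite -sum1_card (eq_bigl (fun x => (x \in A) && P x)); last by move=> x; rewrite inE.
by rewrite big_mkcondr /=; apply: eq_bigr => x _; case: (P x).
Qed.

Lemma half_count (W : 'M['F_2]_m) u c1 : (c1 <= W)%MS -> dot u c1 = 1 ->
  (#|[set c in RS W | dot u c == 0%R]| * 2 = 2 ^ \rank W)%N.
Proof.
move=> c1W d1.
have E : #|[set c in RS W | dot u c == 0]| = #|RS W :\: [set c | dot u c == 0]|.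
  have -> : RS W :\: [set c | dot u c == 0] =
            [set c + c1 | c in [set c in RS W | dot u c == 0]].
    apply/setP => v; rewrite !inE; apply/andP/imsetP.
      case=> dv vW; exists (v + c1); last by rewrite mx_addK.
        by move: dv; rewrite F2_neq0 !inE addmx_sub // dotDr d1 => /eqP ->; rewrite F2_addxx eqxx.
    case=> c; rewrite !inE => /andP [cW dc] ->; rewrite addmx_sub //.
    by rewrite dotDr d1 (eqP dc) add0r.
  by rewrite card_imset //; apply: addIr.
rewrite muln2 -addnn {2}E -card_rowspace -/(RS W) -[RHS](cardsID [set c | dot u c == 0%R]).
by f_equal; apply: eq_card => c; rewrite !inE andbC.
Qed.


Variable B : {set V}.
Definition cnt (c : V) (e : 'F_2) := #|[set u in B | dot u c == e]|.

Lemma double_count p (W : 'M['F_2]_(p, m)) :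
  (\sum_(c in RS W) cnt c 0%R = \sum_(u in B) #|[set c in RS W | dot u c == 0%R]|)%N.
Proof.
rewrite /cnt; under eq_bigr do rewrite card_sub_sum.
under [RHS]eq_bigr do rewrite card_sub_sum.
exact: exchange_big.
Qed.

Lemma W_dvd (W : 'M['F_2]_m) s : #|B| = (2 * s)%N ->
  (forall c, (c <= W)%MS -> c != 0 -> cnt c 0 = s) -> (2 ^ \rank W %| 2 * s)%N.
Proof.
move=> cB hW; rewrite -card_rowspace -/(RS W).
have R1 : (0 < #|RS W|)%N by apply/card_gt0P; exists 0; rewrite inE sub0mx.
have L : (\sum_(c in RS W) cnt c 0%R = 2 * s + (#|RS W| - 1) * s)%N.
  rewrite (bigD1 0) ?inE ?sub0mx //=; congr addn.
    by rewrite /cnt -cB; apply: eq_card => u; rewrite !inE dot0r eqxx andbT.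
  rewrite (eq_bigr (fun _ => s)); last by move=> c /andP []; rewrite inE => cW c0; exact: hW.
  rewrite (eq_bigl (mem [set c in RS W | c != 0])); last by move=> c; rewrite !inE.
  rewrite sum_nat_const; congr muln.
  rewrite [in RHS](cardD1 0) inE sub0mx /= add1n subSS subn0.
  by apply: eq_card => c; rewrite !inE andbC.
pose perp u := [forall c in RS W, dot u c == 0].
have G : forall u, (2 * #|[set c in RS W | dot u c == 0%R]| = #|RS W| + #|RS W| * perp u)%N.
  move=> u; have [pu|pu] := boolP (perp u).
    have E : #|[set c in RS W | dot u c == 0%R]| = #|RS W|.
      apply: eq_card => c; rewrite !inE.
      apply/andP/idP => [[]//|cW]; split=> //; move/forall_inP: pu; apply.
      by rewrite inE.
    by rewrite E muln1 mul2n addnn.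
  have [c1 c1W dc1] : exists2 c1, c1 \in RS W & dot u c1 = 1.
    move/forall_inPn: pu => [c1 c1W].
    rewrite F2_neq0 => /eqP d1; by exists c1.
  have c1W' : (c1 <= W)%MS by rewrite inE in c1W.
  by rewrite muln0 addn0 mulnC (half_count c1W' dc1) /RS card_rowspace.
have := double_count W; rewrite L => /(congr1 (muln 2)); rewrite big_distrr /=.
under eq_bigr do rewrite G.
rewrite big_split /= sum_nat_const -big_distrr /= cB => H.
apply/dvdnP; exists (\sum_(i in B) perp i)%N.
exact: (arith1 R1 H).
Qed.


Lemma cardV : #|{: V}| = (2 ^ m)%N.
Proof. by rewrite card_mx card_Fp // mul1n. Qed.

Lemma S_bound s j k d : m = d.+1 -> (0 < s)%N -> odd j -> s = (j * 2 ^ k)%N ->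
  (k <= d)%N -> #|B| = (2 * s)%N ->
  (2 ^ (d - k) <= #|[set c | cnt c 0%R != s]|)%N.
Proof.
move=> md s0 oj sE kd cB; set S := [set c | cnt c 0%R != s].
have S0 : (0 : V) \in S.
  rewrite inE; have -> : cnt 0 0 = #|B|.
    by rewrite /cnt; apply: eq_card => u; rewrite !inE dot0r eqxx andbT.
  rewrite cB; apply/negP => /eqP; lia.
pose P (W : 'M['F_2]_m) := [forall c, ((c <= W)%MS && (c \in S)) ==> (c == 0)].
have P0 : P 0 by apply/forallP => c; apply/implyP => /andP [] /[!submx0] /eqP ->.
case: (arg_maxnP (fun W => \rank W) P0) => W PW Wmax.
have hW : forall c, (c <= W)%MS -> c != 0 -> cnt c 0%R = s.
  move=> c cW c0; apply/eqP; apply: contraR c0 => cS.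
  by move/forallP: PW => /(_ c) /implyP; apply; rewrite cW inE.
have rk : (\rank W <= k.+1)%N.
  apply: (pow2_dvd_odd oj); rewrite expnS mulnCA -sE; exact: W_dvd cB hW.
have cover : forall phi : V, exists2 cw, cw \in setX S (RS W) & phi = cw.1 + cw.2.
  move=> phi; have [pW|pW] := boolP (phi <= W)%MS.
    by exists (0, phi); [rewrite inE /= S0 inE pW | rewrite /= add0r].
  have lt : (\rank W < \rank (W + phi)%MS)%N.
    have : (W < W + phi)%MS.
      rewrite ltmxE addsmxSl /=; apply: contra pW => h.
      exact: submx_trans (addsmxSr _ _) h.
    by rewrite ltmxErank => /andP [].
  have nP : ~~ P (W + phi)%MS.
    by apply: contraL lt => PW'; rewrite -leqNgt; apply: Wmax.
  move/forallPn: nP => [c]; rewrite negb_imply => /andP [/andP [cW' cS] c0].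
  move/sub_addsmxP: cW' => [[u1 u2] /= cE].
  have w1W : (u1 *m W <= W)%MS by apply: submxMl.
  rewrite [u2]mx11_scalar mul_scalar_mx in cE.
  case: (F2_cases (u2 0 0)) => t; rewrite t in cE.
    rewrite scale0r addr0 in cE.
    have := implyP (forallP PW c); rewrite {1}cE w1W cS => /(_ isT) c00.
    by rewrite c00 in c0.
  rewrite scale1r in cE.
  exists (c, u1 *m W); first by rewrite inE /= cS inE w1W.
  by rewrite /= cE [_ + phi]addrC mx_addK.
have : (2 ^ m <= #|S| * 2 ^ \rank W)%N.
  rewrite -cardV -card_rowspace -/(RS W) -cardsX.
  apply: leq_trans (leq_imset_card (fun cw : V * V => cw.1 + cw.2) _).
  apply: subset_leq_card; apply/subsetP => phi _.
  by case: (cover phi) => cw cwin ->; apply: imset_f.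
move=> H.
have : (2 ^ (d - k) * 2 ^ k.+1 <= #|S| * 2 ^ k.+1)%N.
  rewrite -expnD (_ : (d - k + k.+1 = m)%N); last by rewrite md; lia.
  apply: (leq_trans H); apply: leq_mul => //.
  by rewrite leq_exp2l.
by rewrite leq_pmul2r ?expn_gt0.
Qed.


Lemma cnt_sum c : (cnt c 0%R + cnt c 1%R = #|B|)%N.
Proof.
rewrite -(cardsID [set u | dot u c == 0%R] B); congr addn.
  by apply: eq_card => u; rewrite !inE andbC.
by apply: eq_card => u; rewrite !inE -F2_neq0 andbC.
Qed.

Lemma pure_bound s j k d : m = d.+1 -> (0 < s)%N -> odd j -> s = (j * 2 ^ k)%N ->
  (k <= d)%N ->
  (#|[set ce : V * 'F_2 | (ce.1 != 0%R) && (cnt ce.1 ce.2 == s)]| + 2 * 2 ^ (d - k)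
    <= 2 * 2 ^ m)%N.
Proof.
move=> md s0 oj sE kd.
pose X (e : 'F_2) := [set c : V | (c != 0) && (cnt c e == s)].
have sub : [set ce : V * 'F_2 | (ce.1 != 0%R) && (cnt ce.1 ce.2 == s)] \subset
   ((fun c : V => (c, 0%R : 'F_2)) @: X 0%R) :|: ((fun c : V => (c, 1%R : 'F_2)) @: X 1%R).
  apply/subsetP => [[c e]]; rewrite inE /= => /andP [c0 ce].
  case: (F2_cases e) => E; subst e; rewrite inE; apply/orP; [left|right];
    by apply: imset_f; rewrite inE c0.
have le1 := subset_leq_card sub.
have le2 : (#|((fun c : V => (c, 0%R : 'F_2)) @: X 0%R) :|: ((fun c : V => (c, 1%R : 'F_2)) @: X 1%R)|
            <= #|X 0%R| + #|X 1%R|)%N.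
  rewrite cardsU !card_imset; first exact: leq_subr.
    by move=> x y [].
  by move=> x y [].
have pk : (2 * 2 ^ (d - k) <= 2 ^ m)%N.
  by rewrite -expnS leq_exp2l // md ltnS; apply: leq_subr.
have [cB|cB] := eqVneq #|B| (2 * s)%N.
  have X10 : X 1%R = X 0%R.
    apply/setP => c; rewrite !inE; congr andb.
    have := cnt_sum c; rewrite cB => h; apply/eqP/eqP; lia.
  have XS : X 0%R \subset ~: [set c | cnt c 0%R != s].
    by apply/subsetP => c; rewrite !inE negbK => /andP [].
  have hX := subset_leq_card XS.
  have hC := cardsC [set c | cnt c 0%R != s]; rewrite cardV in hC.
  have hS := S_bound md s0 oj sE kd cB.
  have hS2 : (#|[set c | cnt c 0%R != s]| <= 2 ^ m)%N.
    by rewrite -cardV; apply: max_card.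
  rewrite X10 in le1 le2; lia.
have disj : X 0%R :&: X 1%R = set0.
  apply/setP => c; rewrite !inE; apply/negP => /andP [/andP [_ /eqP h0] /andP [_ /eqP h1]].
  by move: cB; rewrite -(cnt_sum c) h0 h1 addnn -mul2n eqxx.
have hU : (#|X 0%R| + #|X 1%R| <= (2 ^ m).-1)%N.
  have hU1 : (#|X 0%R :|: X 1%R| <= #|[set~ (0%R : V)]|)%N.
    by apply: subset_leq_card; apply/subsetP => c; rewrite !inE => /orP [] /andP [].
  have hU2 := cardsU (X 0%R) (X 1%R); rewrite disj cards0 subn0 in hU2.
  by rewrite cardsC1 cardV hU2 in hU1.
lia.
Qed.

End Pure.

Lemma transport_mx n (M M' : 'M['F_2]_n) : \rank M = \rank M' ->
  exists2 P : 'M['F_2]_n, P \in unitmx & (M *m P :=: M')%MS.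
Proof.
move=> rk; exists (invmx (row_ebase M) *m row_ebase M').
  by rewrite unitmx_mul unitmx_inv !row_ebase_unit.
have E1 : M *m (invmx (row_ebase M) *m row_ebase M') =
          col_ebase M *m (pid_mx (\rank M') *m row_ebase M').
  rewrite -{1}(mulmx_ebase M) !mulmxA mulmxK ?row_ebase_unit // rk.
  by rewrite -mulmxA.
rewrite E1; apply: eqmx_trans (eqmxMfull _ _) _.
  by rewrite row_full_unit col_ebase_unit.
apply: eqmx_sym; rewrite -{1}(mulmx_ebase M') -mulmxA.
by apply: eqmxMfull; rewrite row_full_unit col_ebase_unit.
Qed.

Lemma flat_transport n d (Q Q' : {set 'rV['F_2]_n}) :
  Q \in flats n d -> Q' \in flats n d ->
  exists a : 'rV['F_2]_n, exists2 P : 'M['F_2]_n, P \in unitmx &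
    [set a + x *m P | x in Q] = Q'.
Proof.
case/imset2P => x0 M _; rewrite inE => /eqP rM ->.
case/imset2P => x1 M' _; rewrite inE => /eqP rM' ->.
have [P Pu E] := transport_mx (etrans rM (esym rM')).
exists (x1 - x0 *m P), P => //.
apply/setP => y; apply/imsetP/imsetP.
  case=> x /imsetP [u]; rewrite inE => uM -> ->.
  exists (u *m P); last by rewrite mulmxDl addrA subrK.
  by rewrite inE -E submxMr.
case=> v; rewrite inE => vM' ->.
exists (x0 + v *m invmx P).
  apply/imsetP; exists (v *m invmx P) => //; rewrite inE.
  have : (v <= M *m P)%MS by rewrite E.
  by move/(submxMr (invmx P)); rewrite mulmxK.
by rewrite mulmxDl mulmxKV // addrA subrK.
Qed.

Lemma dot_mx m (u c : 'rV['F_2]_m) : u *m c^T = (dot u c)%:M.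
Proof. exact: mx11_scalar. Qed.

Lemma exists_dot m (c : 'rV['F_2]_m) e : c != 0 -> exists u, dot u c = e.
Proof.
move=> c0.
have : ~~ [forall i, c 0 i == 0].
  apply: contra c0 => /forallP h; apply/eqP/matrixP => a b.
  by rewrite [a]ord1 mxE; apply/eqP/h.
case/forallPn => i; rewrite F2_neq0 => /eqP ci.
exists (e *: delta_mx 0 i); rewrite /dot -scalemxAl -rowE !mxE ci.
by rewrite mulr1.
Qed.

Section Global.
Variables (n d : nat).
Local Notation m := d.+1.
Definition XC := [set xC : 'rV['F_2]_n * 'M['F_2]_(m, n) | row_free xC.2].
Definition CE := [set ce : 'rV['F_2]_m * 'F_2 | ce.1 != 0].
Definition Par := setX XC CE.
Definition Qf (p : ('rV['F_2]_n * 'M['F_2]_(m, n)) * ('rV['F_2]_m * 'F_2)) :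
  {set 'rV['F_2]_n} :=
  [set p.1.1 + u *m p.1.2 | u in [set u : 'rV['F_2]_m | dot u p.2.1 == p.2.2]].

Lemma Qf_flat p : p \in Par -> Qf p \in flats n d.
Proof.
move: p => [[x C] [c e]]; rewrite !inE /= => /andP [Cf c0].
have [u0 du0] := exists_dot e c0.
pose K := kermx c^T.
apply/imset2P; exists (x + u0 *m C) (<<K *m C>>%MS).
- by rewrite inE.
- rewrite inE genmxE mxrankMfree // mxrank_ker mxrank_tr rank_rV c0.
  by rewrite subn1.
apply/setP => y; apply/imsetP/imsetP.
  case=> u; rewrite inE => /eqP du ->; exists ((u - u0) *m C).
    rewrite inE genmxE submxMr // sub_kermx mulmxBl !dot_mx du du0 subrr.
    by [].
  by rewrite mulmxBl [u *m C - _]addrC addrA addrK.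
case=> v; rewrite inE genmxE => /submxP [w ->] ->.
exists (u0 + w *m K).
  by rewrite inE dotDl du0 /dot -mulmxA mulmx_ker mulmx0 mxE addr0.
by rewrite mulmxDl mulmxA addrA.
Qed.


Local Notation Param := (('rV['F_2]_n * 'M['F_2]_(m, n)) * ('rV['F_2]_m * 'F_2))%type.

Definition fiber (Q : {set 'rV['F_2]_n}) := [set p in Par | Qf p == Q].

Lemma fiber_le Q Q' : Q \in flats n d -> Q' \in flats n d ->
  (#|fiber Q| <= #|fiber Q'|)%N.
Proof.
move=> QF Q'F; have [a [P Pu E]] := flat_transport QF Q'F.
pose T (p : Param) : Param := ((a + p.1.1 *m P, p.1.2 *m P), p.2).
have Tinj : injective T.
  move=> [[x C] ce] [[x' C'] ce'] [/addrI h1 h2 ->].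
  by rewrite (can_inj (mulmxK Pu) h1) (can_inj (mulmxK Pu) h2).
rewrite -(card_imset _ Tinj); apply: subset_leq_card.
apply/subsetP => _ /imsetP [[[x C] [c e]] pin ->].
move: pin; rewrite !inE /= => /andP [/andP [Cf c0] /eqP QpQ].
rewrite c0 andbT /row_free mxrankMfree ?row_free_unit //; rewrite /row_free in Cf; rewrite Cf /=.
rewrite -E -QpQ /Qf /= -imset_comp; apply/eqP/eq_imset => u /=.
by rewrite mulmxDl addrA mulmxA.
Qed.

Lemma fiber_eq Q Q' : Q \in flats n d -> Q' \in flats n d ->
  #|fiber Q| = #|fiber Q'|.
Proof. by move=> h h'; apply/anti_leq; rewrite !fiber_le. Qed.

Lemma card_Par_sum (X : {set Param}) : X \subset Par ->
  #|X| = (\sum_(Q in flats n d) #|[set p in X | Qf p == Q]|)%N.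
Proof.
move=> XP; rewrite -sum1_card (partition_big Qf (mem (flats n d))); last first.
  by move=> p pX; apply: Qf_flat; apply: (subsetP XP).
apply: eq_bigr => Q _; rewrite -sum1_card; apply: eq_bigl => p; by rewrite inE.
Qed.


Lemma Qf_cap x C c e (A : {set 'rV['F_2]_n}) : row_free C ->
  #|Qf ((x, C), (c, e)) :&: A| = cnt [set u | x + u *m C \in A] c e.
Proof.
move=> Cf; rewrite /cnt.
have -> : Qf ((x, C), (c, e)) :&: A =
   [set x + u *m C | u in [set u in [set u | x + u *m C \in A] | dot u c == e]].
  apply/setP => y; rewrite inE; apply/andP/imsetP.
    case=> /imsetP [u]; rewrite inE => du -> yA.
    by exists u => //; rewrite !inE yA.
  case=> u; rewrite !inE => /andP [uA du] ->; split=> //.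
  by apply/imsetP; exists u; rewrite ?inE.
apply: card_imset => u v /addrI; exact: row_free_inj.
Qed.

Lemma ParGood_bound s j k (A : {set 'rV['F_2]_n}) : (0 < s)%N -> odd j ->
  s = (j * 2 ^ k)%N -> (k <= d)%N ->
  (#|[set p in Par | #|Qf p :&: A| == s]| + #|XC| * (2 * 2 ^ (d - k))
     <= #|XC| * (2 * 2 ^ m))%N.
Proof.
move=> s0 oj sE kd.
rewrite card_sub_sum /Par (eq_bigl (fun p => (p.1 \in XC) && (p.2 \in CE))); last first.
  by move=> [a b]; rewrite in_setX.
rewrite -(pair_big_dep (fun xC => xC \in XC) (fun _ ce => ce \in CE)
   (fun xC ce => (#|Qf (xC, ce) :&: A| == s : nat))) /=.
rewrite -!sum_nat_const -big_split /=; apply: leq_sum => [[x C]] /=.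
rewrite inE /= => Cf.
rewrite -(card_sub_sum CE (fun ce => #|Qf ((x, C), ce) :&: A| == s)).
have <- : #|[set ce : 'rV['F_2]_m * 'F_2 |
             (ce.1 != 0%R) && (cnt [set u | x + u *m C \in A] ce.1 ce.2 == s)]|
          = #|[set ce in CE | #|Qf ((x, C), ce) :&: A| == s]|.
  by apply: eq_card => [[c e]]; rewrite !inE /= Qf_cap.
exact: (pure_bound [set u | x + u *m C \in A] (erefl _) s0 oj sE kd).
Qed.

End Global.
Arguments Qf {n d}.
Arguments fiber {n d}.
Arguments Qf_flat {n d p}.
Arguments fiber_eq {n d Q Q'}.
Arguments card_Par_sum {n d X}.

Lemma arith_main G F N X P a : (0 < N)%N ->
  (G * N + X * (2 * a) <= X * (2 * P.+1))%N -> (F * N = X * (P * 2))%N ->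
  (G * P + F * a <= F * P.+1)%N.
Proof.
move=> N0 H1 H2.
have H1' := leq_mul H1 (leqnn P).
have E1 : (F * N * a = X * (P * 2) * a)%N by rewrite H2.
have E2 : (F * N * P.+1 = X * (P * 2) * P.+1)%N by rewrite H2.
have H3 : (N * (G * P + F * a) <= N * (F * P.+1))%N by nia.
by rewrite leq_pmul2l in H3.
Qed.

Lemma rat_final (G F a b : nat) : (0 < F)%N -> (1 < b)%N -> (a <= b)%N ->
  (G * b.-1 + F * a <= F * b.-1.+1)%N ->
  G%:R / F%:R <= 1 - (a%:R - 1) / (b%:R - 1 : rat).
Proof.
move=> F0 b1 ab key.
have b0 : (0 < b)%N by apply: ltnW.
have E1 : b%:R - 1 = (b.-1)%:R :> rat by rewrite -{1}(prednK b0) -addn1 natrD addrK.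
have bpos : (0 : rat) < b%:R - 1 by rewrite E1 ltr0n -ltnS prednK.
have -> : 1 - (a%:R - 1) / (b%:R - 1) = (b%:R - a%:R) / (b%:R - 1 : rat).
  by field; rewrite lt0r_neq0.
rewrite ler_pdivrMr ?ltr0n // mulrAC ler_pdivlMr // E1 -natrB // -!natrM ler_nat.
rewrite prednK // in key; nia.
Qed.

Unset Implicit Arguments.

Theorem proposition3p2 (d s j k n : nat) (A : {set 'rV['F_2]_n}) :
  (1 <= d)%N -> (1 < s)%N -> (s < 2 ^ d)%N ->
  odd j -> s = (j * 2 ^ k)%N -> (d + 1 <= n)%N ->
  lambda_star d s A <=
    1 - ((2 ^ (d - k))%:R - 1) / ((2 ^ (d + 1))%:R - 1 : rat).
Proof.
move=> d1 s1 sd oj sE dn.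
have s0 : (0 < s)%N by apply: ltnW.
have kd : (k <= d)%N.
  have j0 : (0 < j)%N by case: (posnP j) oj => [->|].
  have : (2 ^ k < 2 ^ d)%N by apply: leq_ltn_trans sd; rewrite sE leq_pmull.
  by rewrite ltn_exp2l // => /ltnW.
pose p0 : (('rV['F_2]_n * 'M['F_2]_(d.+1, n)) * ('rV['F_2]_d.+1 * 'F_2))%type :=
  ((0, pid_mx d.+1), (delta_mx 0 0, 0)).
have p0P : p0 \in Par n d.
  have r : \rank (pid_mx d.+1 : 'M['F_2]_(d.+1, n)) = d.+1 by rewrite rank_pid_mx // -addn1.
  rewrite !inE /= /row_free r eqxx /=.
  apply/eqP => /matrixP /(_ 0 0); rewrite !mxE /= => h.
  by have := congr1 val h.
set Fl := flats n d.
pose N := #|fiber (d:=d) (Qf p0)|.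
have Q0F := Qf_flat p0P.
have fibN : forall Q, Q \in Fl -> #|fiber (d:=d) Q| = N by move=> Q QF; apply: fiber_eq.
have cPar : #|Par n d| = (#|Fl| * N)%N.
  rewrite (card_Par_sum (subxx _)) -sum_nat_const; apply: eq_bigr => Q QF.
  by rewrite -(fibN Q QF).
pose Good := [set Q in Fl | #|Q :&: A| == s].
have cGood : #|[set p in Par n d | #|Qf p :&: A| == s]| = (#|Good| * N)%N.
  rewrite card_Par_sum; last by apply/subsetP => p; rewrite inE => /andP [].
  rewrite -sum_nat_const [in RHS](eq_bigl (fun Q => (Q \in Fl) && (#|Q :&: A| == s))); last first.
    by move=> Q; rewrite inE.
  rewrite [in RHS]big_mkcondr; apply: eq_bigr => Q QF.
  case: ifP => gQ.
    rewrite -(fibN Q QF); apply: eq_card => p; rewrite !inE.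
    by case: (eqVneq (Qf p) Q) => [->|]; rewrite ?gQ ?andbT ?andbF.
  apply/eqP; rewrite cards_eq0; apply/eqP/setP => p; rewrite !inE.
  by case: (eqVneq (Qf p) Q) => [->|]; rewrite ?gQ ?andbT ?andbF.
have cCE : #|CE d| = ((2 ^ d.+1).-1 * 2)%N.
  have -> : CE d = setX [set~ (0 : 'rV['F_2]_d.+1)] [set: 'F_2].
    by apply/setP => [[c e]]; rewrite !inE andbT.
  by rewrite cardsX cardsC1 cardsT card_mx card_Fp // mul1n.
have N0 : (0 < N)%N.
  have : (0 < #|Par n d|)%N by apply/card_gt0P; exists p0.
  by rewrite cPar muln_gt0 => /andP [].
have F0 : (0 < #|Fl|)%N by apply/card_gt0P; exists (Qf p0).
have H1 := @ParGood_bound n d s j k A s0 oj sE kd.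
rewrite cGood in H1.
have H2 : (#|Fl| * N = #|XC n d| * ((2 ^ d.+1).-1 * 2))%N.
  by rewrite -cPar /Par cardsX cCE.
have pos : (0 < 2 ^ d.+1)%N by rewrite expn_gt0.
have ad : (2 ^ (d - k) <= 2 ^ d.+1)%N by rewrite leq_exp2l //; apply: leq_trans (leq_subr _ _) (leqnSn _).
move: H1 H2; rewrite -(prednK pos) => H1 H2.
have key := arith_main N0 H1 H2.
rewrite /lambda_star -/Fl -/Good addn1.
apply: rat_final => //.
by rewrite -{1}(expn0 2) ltn_exp2l.
Qed.
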